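(* Let $\vec{\mathcal{X}}=(\mathcal{X}_0,\mathcal{X}_1)$ be a couple of rotation invariant pseudolattices and let $\vec B=(B_0,B_1)$ be a complex Banach couple. Then for every $s\in\mathbb{A}$: (i) if $f\in\mathcal{F}_{\vec{\mathcal{X}}}(\vec B)$, then $f(s)\in\vec B_{\vec{\mathcal{X}},|s|}$; (ii) if $x\in\vec B_{\vec{\mathcal{X}},|s|}$, then there exists $f\in\mathcal{F}_{\vec{\mathcal{X}}}(\vec B)$ with $f(s)=x$; (iii) $\vec B_{\vec{\mathcal{X}},s}=\vec B_{\vec{\mathcal{X}},|s|}$ with equality of norms.
   Context: A pseudolattice $\mathcal{X}$ assigns to every complex Banach space $B$ a Banach space $\mathcal{X}(B)$ of two-sided sequences $\{b_n\}_{n\in\mathbb{Z}}$ in $B$ such that: if $A$ is a closed subspace of $B$ then $\mathcal{X}(A)$ is a closed subspace of $\mathcal{X}(B)$; there is $C=C(\mathcal X)>0$ with $\|\{Ta_n\}\|_{\mathcal{X}(B)}\le C\|T\|_{A\to B}\|\{a_n\}\|_{\mathcal{X}(A)}$ for all bounded linear $T:A\to B$ and $\{a_n\}\in\mathcal X(A)$; and $\|b_m\|_B\le\|\{b_n\}\|_{\mathcal{X}(B)}$ for all $m$. A couple $(\mathcal X_0,\mathcal X_1)$ is rotation invariant if for every real $\tau$ and every Banach space $B$ the map $\{b_n\}\mapsto\{e^{in\tau}b_n\}$ is an isometry of $\mathcal X_j(B)$ onto itself, $j=0,1$. For a Banach couple $\vec B=(B_0,B_1)$, $\mathcal{J}(\vec{\mathcal{X}},\vec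 B)$ is the Banach space of sequences $\{b_n\}_{n\in\mathbb Z}\subset B_0\cap B_1$ with $\{b_n\}\in\mathcal{X}_0(B_0)$ and $\{e^nb_n\}\in\mathcal{X}_1(B_1)$, normed by $\max\{\|\{b_n\}\|_{\mathcal{X}_0(B_0)},\|\{e^nb_n\}\|_{\mathcal{X}_1(B_1)}\}$. Let $\mathbb{A}=\{z\in\mathbb{C}:1<|z|<e\}$. For $s\in\mathbb{A}$, $\vec B_{\vec{\mathcal{X}},s}$ is the space of all $b=\sum_{n\in\mathbb Z}s^nb_n$ (convergence in $B_0+B_1$) with $\{b_n\}\in\mathcal{J}(\vec{\mathcal{X}},\vec B)$, normed by the infimum of $\|\{b_n\}\|_{\mathcal J(\vec{\mathcal X},\vec B)}$ over all such representations. $\mathcal{F}_{\vec{\mathcal{X}}}(\vec B)$ denotes the Banach space of analytic functions $f:\mathbb{A}\to B_0+B_1$ of the form $f(z)=\sum_{n\in\mathbb Z}z^nb_n$ with $\{b_n\}\in\mathcal{J}(\vec{\mathcal{X}},\vec B)$, normed by $\|f\|=\|\{b_n\}\|_{\mathcal{J}(\vec{\mathcal{X}},\vec B)}$. *)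

(* Defs.v *)
From Stdlib Require Import Reals ZArith.
From Coquelicot Require Import Coquelicot.
Open Scope R_scope.

Notation Banach := (CompleteNormedModule C_AbsRing).

Definition is_linear {A B : ModuleSpace C_Ring} (T : A -> B) : Prop :=
  (forall x y, T (plus x y) = plus (T x) (T y)) /\
  (forall (c : C) x, T (scal c x) = scal c (T x)).

Definition Zpow (s : C) (n : Z) : C :=
  match n with
  | Z0 => 1%C
  | Zpos p => pow_n (K := C_Ring) s (Pos.to_nat p)
  | Zneg p => Cinv (pow_n (K := C_Ring) s (Pos.to_nat p))
  end.

Definition cis (t : R) : C := (cos t, sin t).

Definition seqZ (B : Type) := Z -> B.

(* Pseudolattice: to every complex Banach space B a Banach space X(B) of
   two-sided sequences in B, given by a membership predicate and a norm
   (the norm is only meaningful on members). *)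
Record pseudolattice := {
  pl_mem  : forall B : Banach, seqZ B -> Prop;
  pl_norm : forall B : Banach, seqZ B -> R;
  pl_mem_zero : forall B : Banach, pl_mem B (fun _ => zero);
  pl_mem_plus : forall (B : Banach) a b, pl_mem B a -> pl_mem B b ->
      pl_mem B (fun n => plus (a n) (b n));
  pl_mem_scal : forall (B : Banach) (c : C) a, pl_mem B a -> pl_mem B (fun n => scal c (a n));
  pl_norm_triangle : forall (B : Banach) a b, pl_mem B a -> pl_mem B b ->
      pl_norm B (fun n => plus (a n) (b n)) <= pl_norm B a + pl_norm B b;
  pl_norm_scal : forall (B : Banach) (c : C) a, pl_mem B a ->
      pl_norm B (fun n => scal c (a n)) = Cmod c * pl_norm B a;
  pl_norm_definite : forall (B : Banach) a, pl_mem B a -> pl_norm B a = 0 ->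
      a = (fun _ => zero);
  pl_complete : forall (B : Banach) (u : nat -> seqZ B), (forall k, pl_mem B (u k)) ->
      (forall eps, 0 < eps -> exists N, forall p q, (N <= p)%nat -> (N <= q)%nat ->
          pl_norm B (fun n => minus (u p n) (u q n)) < eps) ->
      exists a, pl_mem B a /\
        (forall eps, 0 < eps -> exists N, forall p, (N <= p)%nat ->
          pl_norm B (fun n => minus (u p n) (a n)) < eps);
  (* closed subspaces: A (identified with its image under a linear isometric
     embedding j into B) gives X(A) a (closed) subspace of X(B) *)
  pl_subspace : forall (A B : Banach) (j : A -> B), is_linear j ->
      (forall x, norm (j x) = norm x) ->
      forall a, pl_mem A a ->
        pl_mem B (fun n => j (a n)) /\ pl_norm B (fun n => j (a n)) = pl_norm A a;
  pl_const : R;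
  pl_const_pos : 0 < pl_const;
  pl_operator : forall (A B : Banach) (T : A -> B) (M : R), is_linear T ->
      0 <= M -> (forall x, norm (T x) <= M * norm x) ->
      forall a, pl_mem A a ->
        pl_mem B (fun n => T (a n)) /\
        pl_norm B (fun n => T (a n)) <= pl_const * M * pl_norm A a;
  pl_coord : forall (B : Banach) a, pl_mem B a -> forall m, norm (a m) <= pl_norm B a
}.

Definition rot {B : Banach} (tau : R) (b : seqZ B) : seqZ B :=
  fun n => scal (cis (IZR n * tau)) (b n).

Definition rotation_invariant (X : pseudolattice) : Prop :=
  forall (tau : R) (B : Banach),
    (forall b, pl_mem X B b ->
       pl_mem X B (rot tau b) /\ pl_norm X B (rot tau b) = pl_norm X B b) /\
    (forall b, pl_mem X B b -> exists a, pl_mem X B a /\ rot tau a = b).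

Definition rotation_invariant_couple (X0 X1 : pseudolattice) : Prop :=
  rotation_invariant X0 /\ rotation_invariant X1.

(* Complex Banach couple: two Banach spaces linearly and injectively mapped into
   a common complex vector space V, such that the sum B0+B1 is Hausdorff, i.e.
   the K-functional seminorm inf{|x0|+|x1| : x = x0 + x1} vanishes only at 0
   (equivalent to continuous embeddings in a common Hausdorff TVS). *)
Record couple := {
  cV  : ModuleSpace C_Ring;
  cB0 : Banach;
  cB1 : Banach;
  ci0 : cB0 -> cV;
  ci1 : cB1 -> cV;
  ci0_lin : is_linear (ci0 : cB0 -> cV);
  ci1_lin : is_linear (ci1 : cB1 -> cV);
  ci0_inj : forall x y, ci0 x = ci0 y -> x = y;
  ci1_inj : forall x y, ci1 x = ci1 y -> x = y;
  c_hausdorff : forall x : cV,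
      (forall eps, 0 < eps -> exists (x0 : cB0) (x1 : cB1),
          plus (ci0 x0) (ci1 x1) = x /\ norm x0 + norm x1 < eps) ->
      x = zero
}.

Section CoupleDefs.
Variable Bc : couple.

(* y has B0+B1 norm < eps *)
Definition K_small (y : cV Bc) (eps : R) : Prop :=
  exists (y0 : cB0 Bc) (y1 : cB1 Bc),
    plus (ci0 Bc y0) (ci1 Bc y1) = y /\ norm y0 + norm y1 < eps.

(* partial sum  sum_{n=-N}^{M} u_n *)
Definition psumZ (u : Z -> cV Bc) (N M : nat) : cV Bc :=
  sum_n (fun k => u (Z.of_nat k - Z.of_nat N)%Z) (N + M).

Definition seriesZ_conv (u : Z -> cV Bc) (x : cV Bc) : Prop :=
  forall eps, 0 < eps -> exists K0 : nat, forall N M, (K0 <= N)%nat -> (K0 <= M)%nat ->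
    K_small (minus (psumZ u N M) x) eps.

End CoupleDefs.

Section JDefs.
Variables (X0 X1 : pseudolattice) (Bc : couple).

(* {b_n} in J(X, B) with B0-representatives a0 and B1-representatives a1 *)
Definition J_rep (b : Z -> cV Bc) (a0 : seqZ (cB0 Bc)) (a1 : seqZ (cB1 Bc)) : Prop :=
  (forall n, ci0 Bc (a0 n) = b n) /\ (forall n, ci1 Bc (a1 n) = b n) /\
  pl_mem X0 (cB0 Bc) a0 /\
  pl_mem X1 (cB1 Bc) (fun n => scal (RtoC (exp (IZR n))) (a1 n)).

Definition J_norm (a0 : seqZ (cB0 Bc)) (a1 : seqZ (cB1 Bc)) : R :=
  Rmax (pl_norm X0 (cB0 Bc) a0)
       (pl_norm X1 (cB1 Bc) (fun n => scal (RtoC (exp (IZR n))) (a1 n))).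

Definition in_J (b : Z -> cV Bc) : Prop := exists a0 a1, J_rep b a0 a1.

Definition in_Bs (s : C) (x : cV Bc) : Prop :=
  exists b, in_J b /\ seriesZ_conv Bc (fun n => scal (Zpow s n) (b n)) x.

Definition Bs_norm (s : C) (x : cV Bc) : Rbar :=
  Glb_Rbar (fun r => exists b a0 a1, J_rep b a0 a1 /\
              seriesZ_conv Bc (fun n => scal (Zpow s n) (b n)) x /\
              r = J_norm a0 a1).

Definition in_annulus (z : C) : Prop := 1 < Cmod z < exp 1.

Definition holo_at (f : C -> cV Bc) (z : C) : Prop :=
  exists d : cV Bc, forall eps, 0 < eps -> exists delta, 0 < delta /\
    forall h : C, h <> 0%C -> Cmod h < delta ->
      K_small Bc (minus (minus (f (z + h)%C) (f z)) (scal h d)) (eps * Cmod h).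

Definition in_F (f : C -> cV Bc) : Prop :=
  (forall z, in_annulus z -> holo_at f z) /\
  exists b, in_J b /\
    forall z, in_annulus z -> seriesZ_conv Bc (fun n => scal (Zpow z n) (b n)) (f z).

End JDefs.

(* Main.v *)
Require Import Defs.
From Stdlib Require Import Reals ZArith Lra Lia FunctionalExtensionality ClassicalEpsilon.
From Coquelicot Require Import Coquelicot.
Open Scope R_scope.

Lemma C_ext (x y : C) : fst x = fst y -> snd x = snd y -> x = y.
Proof. destruct x, y; simpl; intros; subst; reflexivity. Qed.

Lemma cis_add a b : cis (a + b) = Cmult (cis a) (cis b).
Proof. unfold cis; apply C_ext; simpl; [rewrite cos_plus|rewrite sin_plus]; ring. Qed.

Lemma cis_0 : cis 0 = 1%C.
Proof. unfold cis; apply C_ext; simpl; [rewrite cos_0|rewrite sin_0]; ring. Qed.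

Lemma cis_neg t : Cmult (cis t) (cis (-t)) = 1%C.
Proof. rewrite <- cis_add. replace (t + - t) with 0 by ring. apply cis_0. Qed.

Lemma cis_nz t : cis t <> 0%C.
Proof. intro H. pose proof (cis_neg t) as E. rewrite H in E.
  assert (E2: fst (Cmult 0 (cis (-t))) = fst (RtoC 1)) by (rewrite E; reflexivity).
  simpl in E2. lra. Qed.

Lemma Cinv_cis t : Cinv (cis t) = cis (-t).
Proof.
  pose proof (cis_neg t) as E.
  assert (H := cis_nz t).
  transitivity (Cmult (Cinv (cis t)) (Cmult (cis t) (cis (-t)))).
  - rewrite E. field. exact H.
  - field_simplify; [|exact H]. reflexivity.
Qed.

Lemma pow_n_mult (a b : C) k : pow_n (K:=C_Ring) (Cmult a b) k = Cmult (pow_n (K:=C_Ring) a k) (pow_n (K:=C_Ring) b k).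
Proof. induction k; simpl. - unfold one; simpl. apply C_ext; simpl; ring.
  - unfold mult; simpl. rewrite IHk. ring. Qed.

Lemma pow_n_cis t k : pow_n (K:=C_Ring) (cis t) k = cis (INR k * t).
Proof. induction k.
  - simpl. replace (0*t) with 0 by ring. rewrite cis_0. reflexivity.
  - change (pow_n (K:=C_Ring) (cis t) (S k)) with (Cmult (cis t) (pow_n (K:=C_Ring) (cis t) k)).
    rewrite IHk, <- cis_add. f_equal. rewrite S_INR. ring. Qed.

Lemma pow_n_RtoC r k : pow_n (K:=C_Ring) (RtoC r) k = RtoC (r ^ k).
Proof. induction k.
  - reflexivity.
  - change (pow_n (K:=C_Ring) (RtoC r) (S k)) with (Cmult (RtoC r) (pow_n (K:=C_Ring) (RtoC r) k)).
    rewrite IHk. apply C_ext; simpl; ring. Qed.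

Lemma RtoC_nz r : r <> 0 -> RtoC r <> 0%C.
Proof. intros H E. apply H. injection E. auto. Qed.

Lemma Zpow_polar (r t : R) (n : Z) : r <> 0 ->
  Zpow (Cmult (RtoC r) (cis t)) n = Cmult (Zpow (RtoC r) n) (cis (IZR n * t)).
Proof.
  intro Hr. destruct n as [|p|p]; simpl.
  - replace (0*t) with 0 by ring. rewrite cis_0. apply C_ext; simpl; ring.
  - rewrite pow_n_mult, pow_n_cis. rewrite INR_IPR. reflexivity.
  - rewrite pow_n_mult, pow_n_cis, pow_n_RtoC.
    assert (Hp : RtoC (r ^ Pos.to_nat p) <> 0%C) by (apply RtoC_nz, pow_nonzero, Hr).
    assert (Hc := cis_nz (INR (Pos.to_nat p) * t)).
    replace (IZR (Z.neg p) * t) with (-(INR (Pos.to_nat p) * t)) by (unfold IZR; rewrite <- INR_IPR; ring).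
    rewrite <- Cinv_cis. field. split; assumption.
Qed.

Lemma polar (s : C) : s <> 0%C -> exists t, s = Cmult (RtoC (Cmod s)) (cis t).
Proof.
  intro Hs. destruct s as [x y].
  assert (Hr : 0 < Cmod (x,y)) by (apply Cmod_gt_0; exact Hs).
  set (r := Cmod (x,y)) in *.
  assert (Hr2 : r * r = x*x + y*y).
  { unfold r, Cmod; simpl. rewrite sqrt_sqrt. ring. nra. }
  assert (Hc : -1 <= x / r <= 1).
  { split.
    - apply (Rmult_le_reg_r r); [lra|]. field_simplify; [|lra]. nra.
    - apply (Rmult_le_reg_r r); [lra|]. field_simplify; [|lra]. nra. }
  assert (Hs2 : sqrt (1 - (x/r)²) = Rabs (y / r)).
  { rewrite <- sqrt_Rsqr_abs. f_equal. unfold Rsqr.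
    replace (1 - x / r * (x / r)) with ((r*r - x*x)/(r*r)) by (field; lra).
    replace (y / r * (y / r)) with ((y*y)/(r*r)) by (field; lra).
    f_equal. lra. }
  destruct (Rle_or_lt 0 y) as [Hy|Hy].
  - exists (acos (x/r)). apply C_ext; simpl.
    + rewrite cos_acos by exact Hc. field. lra.
    + rewrite sin_acos by exact Hc. rewrite Hs2. rewrite Rabs_pos_eq.
      field. lra. apply Rdiv_le_0_compat; lra.
  - exists (- acos (x/r)). apply C_ext; simpl.
    + rewrite cos_neg, cos_acos by exact Hc. field. lra.
    + rewrite sin_neg, sin_acos by exact Hc. rewrite Hs2. rewrite Rabs_left.
      field. lra. apply (Rmult_lt_reg_r r); [lra|]. field_simplify; lra.
Qed.

Definition rotV {V : ModuleSpace C_Ring} (tau : R) (b : Z -> V) : Z -> V :=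
  fun n => scal (cis (IZR n * tau)) (b n).

Lemma lin_scal {A B : ModuleSpace C_Ring} (T : A -> B) (c : C) (x : A) : Defs.is_linear T -> T (scal (K:=C_Ring) c x) = scal (K:=C_Ring) c (T x).
Proof. intros [_ H]. apply H. Qed.

Lemma J_rot (X0 X1 : pseudolattice) (Bc : couple) tau b a0 a1 :
  rotation_invariant_couple X0 X1 -> J_rep X0 X1 Bc b a0 a1 ->
  J_rep X0 X1 Bc (rotV tau b) (rot tau a0) (rot tau a1) /\
  J_norm X0 X1 Bc (rot tau a0) (rot tau a1) = J_norm X0 X1 Bc a0 a1.
Proof.
  intros [R0 R1] [H0 [H1 [M0 M1]]].
  assert (E : (fun n => scal (RtoC (exp (IZR n))) (rot tau a1 n)) =
              rot tau (fun n => scal (RtoC (exp (IZR n))) (a1 n))).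
  { apply functional_extensionality; intro n. unfold rot.
    rewrite !scal_assoc. f_equal. unfold mult; simpl. apply Cmult_comm. }
  destruct ((proj1 (R0 tau (cB0 Bc))) a0 M0) as [M0' N0].
  destruct ((proj1 (R1 tau (cB1 Bc))) _ M1) as [M1' N1].
  split.
  - split; [|split; [|split]].
    + intro n. unfold rot, rotV. rewrite lin_scal by apply ci0_lin. rewrite H0. reflexivity.
    + intro n. unfold rot, rotV. rewrite lin_scal by apply ci1_lin. rewrite H1. reflexivity.
    + exact M0'.
    + rewrite E. exact M1'.
  - unfold J_norm. rewrite E, N0, N1. reflexivity.
Qed.

Lemma seriesZ_ext (Bc : couple) u v x : (forall n, u n = v n) ->
  seriesZ_conv Bc u x -> seriesZ_conv Bc v x.
Proof. intros H. replace v with u by (apply functional_extensionality; exact H). auto. Qed.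

Lemma term1 (V : ModuleSpace C_Ring) (s : C) r t (b : Z -> V) n :
  r <> 0 -> s = Cmult (RtoC r) (cis t) ->
  scal (Zpow (RtoC r) n) (rotV t b n) = scal (Zpow s n) (b n).
Proof. intros Hr ->. unfold rotV. rewrite scal_assoc, Zpow_polar by exact Hr. reflexivity. Qed.

Lemma term2 (V : ModuleSpace C_Ring) (s : C) r t (b : Z -> V) n :
  r <> 0 -> s = Cmult (RtoC r) (cis t) ->
  scal (Zpow s n) (rotV (-t) b n) = scal (Zpow (RtoC r) n) (b n).
Proof. intros Hr ->. unfold rotV. rewrite scal_assoc, Zpow_polar by exact Hr. f_equal.
  unfold mult; simpl. rewrite <- Cmult_assoc, <- cis_add.
  replace (IZR n * t + IZR n * - t) with 0 by ring. rewrite cis_0. ring. Qed.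

Lemma annulus_nz s : in_annulus s -> s <> 0%C.
Proof. intros [H _] E. rewrite E, Cmod_0 in H. lra. Qed.
Lemma lin_plus {A B : ModuleSpace C_Ring} (T : A -> B) x y : Defs.is_linear T -> T (plus x y) = plus (T x) (T y).
Proof. intros [H _]. apply H. Qed.

Lemma lin_opp {A B : ModuleSpace C_Ring} (T : A -> B) x : Defs.is_linear T -> T (opp x) = opp (T x).
Proof. intros HT. rewrite <- !(scal_opp_one (K:=C_Ring)). apply lin_scal; exact HT. Qed.

Lemma lin_minus {A B : ModuleSpace C_Ring} (T : A -> B) x y : Defs.is_linear T -> T (minus x y) = minus (T x) (T y).
Proof. intros HT. unfold minus. rewrite (lin_plus T), (lin_opp T) by exact HT. reflexivity. Qed.

Lemma ag_mm {G : AbelianGroup} (a b c d : G) : minus (plus a b) (plus c d) = plus (minus a c) (minus b d).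
Proof. unfold minus. rewrite opp_plus. rewrite !plus_assoc. f_equal.
  rewrite <- !plus_assoc. f_equal. apply plus_comm. Qed.

Lemma ag_mm2 {G : AbelianGroup} (p x y : G) : minus (minus p y) (minus p x) = minus x y.
Proof. unfold minus. rewrite (opp_plus (G:=G) p). rewrite opp_opp.
  rewrite (plus_comm (opp p) x). rewrite plus_assoc. rewrite <- (plus_assoc p).
  rewrite (plus_comm (opp y)). rewrite (plus_comm p). rewrite <- plus_assoc.
  rewrite (plus_opp_r (G:=G)), plus_zero_r. reflexivity. Qed.

Lemma norm_minus_le {K : AbsRing} {V : NormedModule K} (x y : V) : norm (minus x y) <= norm x + norm y.
Proof. unfold minus. eapply Rle_trans; [apply norm_triangle|]. rewrite norm_opp. lra. Qed.

Lemma minus_zero_eq {G : AbelianGroup} (x y : G) : minus x y = zero -> x = y.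
Proof. intro H. transitivity (plus (minus x y) y).
  - unfold minus. rewrite <- plus_assoc, (plus_opp_l (G:=G)), plus_zero_r. reflexivity.
  - rewrite H. apply plus_zero_l. Qed.

Lemma seriesZ_unique Bc u x y : seriesZ_conv Bc u x -> seriesZ_conv Bc u y -> x = y.
Proof.
  intros Hx Hy. assert (E: minus x y = zero).
  { apply c_hausdorff. intros eps He.
    destruct (Hx (eps/2)) as [K1 H1]; [lra|]. destruct (Hy (eps/2)) as [K2 H2]; [lra|].
    set (N := max K1 K2).
    destruct (H1 N N) as [p0 [p1 [Ep Np]]]; try apply Nat.le_max_l.
    destruct (H2 N N) as [q0 [q1 [Eq Nq]]]; try apply Nat.le_max_r.
    exists (minus q0 p0), (minus q1 p1). split.
    - rewrite (lin_minus (ci0 Bc)) by apply ci0_lin. rewrite (lin_minus (ci1 Bc)) by apply ci1_lin.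
      rewrite <- (ag_mm (G:=cV Bc)). rewrite <- (ag_mm2 (psumZ Bc u N N) x y). f_equal; [exact Eq|exact Ep].
    - eapply Rle_lt_trans; [apply Rplus_le_compat; [apply (norm_minus_le (K:=C_AbsRing) (V:=cB0 Bc))|apply (norm_minus_le (K:=C_AbsRing) (V:=cB1 Bc))]|lra]. }
  apply minus_zero_eq. exact E.
Qed.


Lemma minus_minus_l {G : AbelianGroup} (x l : G) : minus x (minus x l) = l.
Proof. unfold minus. rewrite (opp_plus (G:=G)), opp_opp, plus_assoc, (plus_opp_r (G:=G)), plus_zero_l. reflexivity. Qed.

Lemma norm_minus_le' {K : AbsRing} {V : NormedModule K} (x y : V) : norm (minus x y) <= norm x + norm y.
Proof. unfold minus. eapply Rle_trans; [apply norm_triangle|]. rewrite norm_opp. lra. Qed.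

Lemma norm_lim_le {K : AbsRing} {V : NormedModule K} (a : nat -> V) l B :
  is_series a l -> (forall N, norm (sum_n a N) <= B) -> norm l <= B.
Proof.
  intros Hl HB. destruct (Rle_or_lt (norm l) B) as [H|H]; [exact H|exfalso].
  assert (He : 0 < norm l - B) by lra.
  destruct (proj1 (filterlim_locally_ball_norm _ _) Hl (mkposreal _ He)) as [N HN].
  specialize (HN N (Nat.le_refl N)). unfold ball_norm in HN. simpl in HN.
  pose proof (norm_minus_le' (sum_n a N) (minus (sum_n a N) l)) as T.
  rewrite minus_minus_l in T. specialize (HB N). lra.
Qed.

Lemma sum_n_mono (b : nat -> R) : (forall n, 0 <= b n) -> forall N j, sum_n b N <= sum_n b (N + j).
Proof. intros Hb N j. induction j.
  - rewrite Nat.add_0_r. lra.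
  - rewrite Nat.add_succ_r, sum_Sn. unfold plus; simpl. specialize (Hb (S (N+j))). lra. Qed.

Lemma psum_le (b : nat -> R) l : (forall n, 0 <= b n) -> is_series b l -> forall N, sum_n b N <= l.
Proof.
  intros Hb Hl N. destruct (Rle_or_lt (sum_n b N) l) as [H|H]; [exact H|exfalso].
  assert (He : 0 < sum_n b N - l) by lra.
  destruct (proj1 (filterlim_locally_ball_norm _ _) Hl (mkposreal _ He)) as [N1 HN].
  specialize (HN (N + N1)%nat ltac:(lia)). unfold ball_norm in HN. simpl in HN.
  pose proof (sum_n_mono b Hb N N1).
  change (norm (minus (sum_n b (N + N1)) l)) with (Rabs (sum_n b (N + N1) - l)) in HN.
  apply Rabs_def2 in HN. lra.
Qed.

Lemma lim_inv_S : is_lim_seq (fun n => / (INR n + 1)) 0.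
Proof.
  assert (H : is_lim_seq (fun n => INR (S n)) p_infty) by (apply (is_lim_seq_incr_1 INR), is_lim_seq_INR).
  apply is_lim_seq_inv in H; [|discriminate].
  apply (is_lim_seq_ext (fun n => / INR (S n))); [|exact H]. intro n. rewrite S_INR. reflexivity.
Qed.

Lemma ex_series_n2 (q : R) : 0 < q < 1 -> ex_series (fun n => INR n ^ 2 * q ^ n).
Proof.
  intros Hq.
  set (a := fun n => (INR n + 1) ^ 2 * q ^ n).
  assert (Ha : forall n, a n <> 0).
  { intro n. unfold a. apply Rmult_integral_contrapositive. split; apply pow_nonzero.
    pose proof (pos_INR n); lra. lra. }
  assert (HL : is_lim_seq (fun n => Rabs (a (S n) / a n)) q).
  { assert (H1 : is_lim_seq (fun n => (1 + / (INR n + 1)) * (1 + / (INR n + 1)) * q) ((1 + 0) * (1 + 0) * q)).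
    { apply is_lim_seq_mult'; [apply is_lim_seq_mult'|apply is_lim_seq_const];
      apply is_lim_seq_plus'; (apply is_lim_seq_const || apply lim_inv_S). }
    replace ((1 + 0) * (1 + 0) * q) with q in H1 by ring.
    eapply is_lim_seq_ext; [|exact H1]. intro n. unfold a. rewrite S_INR.
    pose proof (pos_INR n).
    rewrite Rabs_pos_eq.
    - assert (q ^ n <> 0) by (apply pow_nonzero; lra). simpl. field. split; [assumption|lra].
    - apply Rdiv_le_0_compat; [apply Rmult_le_pos; apply pow_le; lra|].
      apply Rmult_lt_0_compat; apply pow_lt; lra. }
  pose proof (ex_series_DAlembert a q (proj2 Hq) Ha HL) as E.
  apply (ex_series_le (K:=R_AbsRing) (V:=R_CompleteNormedModule) _ (fun n => Rabs (a n))); [|exact E].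
  intro n. change (norm (INR n ^ 2 * q ^ n)) with (Rabs (INR n ^ 2 * q ^ n)).
  pose proof (pos_INR n).
  rewrite !Rabs_pos_eq.
  - unfold a. apply Rmult_le_compat_r; [apply pow_le; lra|]. nra.
  - unfold a. apply Rmult_le_pos; apply pow_le; lra.
  - apply Rmult_le_pos; apply pow_le; lra.
Qed.

Definition Lser {V : CompleteNormedModule C_AbsRing} (f : nat -> V) : V :=
  epsilon (inhabits zero) (fun l => is_series f l).

Lemma Lser_correct {V : CompleteNormedModule C_AbsRing} (f : nat -> V) : ex_series f -> is_series f (Lser f).
Proof. intro H. unfold Lser. apply epsilon_spec. exact H. Qed.

Definition cpow (w : C) (n : nat) : C := pow_n (K:=C_Ring) w n.

Lemma Cmod_cpow w n : Cmod (cpow w n) = Cmod w ^ n.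
Proof. induction n; simpl. - apply Cmod_1. - unfold cpow in *; simpl. unfold mult; simpl.
  rewrite Cmod_mult, IHn. reflexivity. Qed.

Lemma norm_scalC {V : CompleteNormedModule C_AbsRing} (c : C) (x : V) : norm (scal c x) <= Cmod c * norm x.
Proof. exact (norm_scal (K:=C_AbsRing) (V:=V) c x). Qed.

Definition PS {V : CompleteNormedModule C_AbsRing} (a : nat -> V) (w : C) : V :=
  Lser (fun n => scal (cpow w n) (a n)).

Lemma bound_M_nonneg {V : CompleteNormedModule C_AbsRing} (a : nat -> V) M rho :
  0 < rho -> (forall n, norm (a n) <= M / rho ^ n) -> 0 <= M.
Proof. intros Hr H. specialize (H 0%nat). simpl in H. pose proof (norm_ge_0 (a 0%nat)). lra. Qed.

Lemma geom_ex (q : R) : 0 <= q < 1 -> ex_series (fun n => q ^ n).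
Proof. intro H. exists (/ (1 - q)). apply is_series_geom. rewrite Rabs_pos_eq; lra. Qed.

Lemma PS_conv {V : CompleteNormedModule C_AbsRing} (a : nat -> V) M rho w :
  0 < rho -> (forall n, norm (a n) <= M / rho ^ n) -> Cmod w < rho ->
  is_series (fun n => scal (cpow w n) (a n)) (PS a w).
Proof.
  intros Hr HM Hw. apply Lser_correct.
  assert (HM0 := bound_M_nonneg a M rho Hr HM).
  apply (ex_series_le _ (fun n => M * (Cmod w / rho) ^ n)).
  - intro n. eapply Rle_trans; [apply norm_scalC|]. rewrite Cmod_cpow.
    eapply Rle_trans; [apply Rmult_le_compat_l; [apply pow_le, Cmod_ge_0|apply HM]|].
    unfold Rdiv. rewrite Rpow_mult_distr, pow_inv. right; ring.
  - apply (ex_series_scal_l (K:=R_AbsRing) (V:=R_NormedModule) M (fun n => (Cmod w / rho) ^ n)).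
    apply geom_ex. split. apply Rdiv_le_0_compat; [apply Cmod_ge_0|lra].
    apply Rmult_lt_reg_r with rho; [lra|]. field_simplify; lra.
Qed.

Fixpoint Dn (w : C) (n : nat) : C :=
  match n with O => 0%C | S k => Cplus (Cmult w (Dn w k)) (cpow w k) end.

Definition En (w k : C) (n : nat) : C :=
  Cminus (Cminus (cpow (Cplus w k) n) (cpow w n)) (Cmult k (Dn w n)).

Lemma cpow_S w n : cpow w (S n) = Cmult w (cpow w n).
Proof. reflexivity. Qed.

Lemma En_S w k n : En w k (S n) = Cplus (Cmult (Cplus w k) (En w k n)) (Cmult (Cmult k k) (Dn w n)).
Proof. unfold En. rewrite !cpow_S. simpl. ring. Qed.

Lemma Dn_bound w R n : Cmod w <= R -> Cmod (Dn w n) * R <= INR n * R ^ n.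
Proof.
  intro HR. assert (HR0 : 0 <= R) by (pose proof (Cmod_ge_0 w); lra).
  induction n.
  - simpl. rewrite Cmod_0. lra.
  - simpl Dn. rewrite S_INR.
    eapply Rle_trans. { apply Rmult_le_compat_r; [exact HR0|]. apply Cmod_triangle. }
    rewrite Cmod_mult, Cmod_cpow.
    assert (A : Cmod w * Cmod (Dn w n) * R <= R * (INR n * R ^ n)).
    { rewrite Rmult_assoc. apply Rmult_le_compat; try lra; [apply Cmod_ge_0|].
      apply Rmult_le_pos; [apply Cmod_ge_0|exact HR0]. }
    assert (B : Cmod w ^ n * R <= R ^ n * R).
    { apply Rmult_le_compat_r; [exact HR0|]. apply pow_incr. split; [apply Cmod_ge_0|exact HR]. }
    simpl. nra.
Qed.

Lemma En_bound w k n : let R := Cmod w + Cmod k in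
  Cmod (En w k n) * R ^ 2 <= INR n ^ 2 * Cmod k ^ 2 * R ^ n.
Proof.
  intro R. assert (Hw := Cmod_ge_0 w). assert (Hk := Cmod_ge_0 k).
  assert (HR0 : 0 <= R) by (unfold R; lra).
  induction n.
  - assert (E0 : En w k 0 = RtoC 0) by (unfold En, cpow; simpl; unfold one; simpl; ring).
    rewrite E0, Cmod_0. simpl. lra.
  - assert (T : Cmod (Cplus (Cmult (Cplus w k) (En w k n)) (Cmult (Cmult k k) (Dn w n)))
               <= R * Cmod (En w k n) + Cmod k ^ 2 * Cmod (Dn w n)).
    { eapply Rle_trans; [apply Cmod_triangle|]. rewrite !Cmod_mult.
      apply Rplus_le_compat.
      + apply Rmult_le_compat_r; [apply Cmod_ge_0|]. apply Cmod_triangle.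
      + right. simpl. ring. }
    assert (D := Dn_bound w R n ltac:(unfold R; lra)).
    assert (T2 : Cmod (En w k (S n)) * R ^ 2 <= R * (Cmod (En w k n) * R ^ 2) + Cmod k ^ 2 * (Cmod (Dn w n) * R) * R).
    { rewrite En_S. eapply Rle_trans. { apply Rmult_le_compat_r; [apply pow_le; exact HR0|exact T]. }
      right. simpl. ring. }
    eapply Rle_trans; [exact T2|].
    assert (X1 : R * (Cmod (En w k n) * R ^ 2) <= R * (INR n ^ 2 * Cmod k ^ 2 * R ^ n))
      by (apply Rmult_le_compat_l; assumption).
    assert (X2 : Cmod k ^ 2 * (Cmod (Dn w n) * R) * R <= Cmod k ^ 2 * (INR n * R ^ n) * R).
    { apply Rmult_le_compat_r; [exact HR0|]. apply Rmult_le_compat_l; [apply pow_le; exact Hk|exact D]. }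
    assert (X3 : R * (INR n ^ 2 * Cmod k ^ 2 * R ^ n) + Cmod k ^ 2 * (INR n * R ^ n) * R
                 <= INR (S n) ^ 2 * Cmod k ^ 2 * R ^ S n).
    { rewrite S_INR. simpl. assert (0 <= Cmod k * Cmod k * (R * R ^ n)).
      { apply Rmult_le_pos; [nra|]. apply Rmult_le_pos; [exact HR0|apply pow_le; exact HR0]. }
      pose proof (pos_INR n). nra. }
    lra.
Qed.

Lemma termE_bound (w k : C) (n : nat) (r' rho M nrm : R) :
  0 < Cmod w -> Cmod w + Cmod k <= r' -> 0 < rho -> 0 <= M -> 0 <= nrm -> nrm <= M / rho ^ n ->
  Cmod (En w k n) * nrm <= (M * Cmod k ^ 2 / Cmod w ^ 2) * (INR n ^ 2 * (r' / rho) ^ n).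
Proof.
  intros Hw HR Hr HM Hn0 Hn. set (R := Cmod w + Cmod k) in *.
  assert (Hk := Cmod_ge_0 k). assert (HR0 : 0 < R) by (unfold R; lra).
  assert (E1 : Cmod (En w k n) <= INR n ^ 2 * Cmod k ^ 2 * R ^ n / Cmod w ^ 2).
  { pose proof (En_bound w k n) as B. simpl in B. fold R in B.
    apply Rmult_le_reg_r with (Cmod w ^ 2); [apply pow_lt; lra|].
    unfold Rdiv. rewrite Rmult_assoc, Rinv_l, Rmult_1_r by (apply pow_nonzero; lra).
    eapply Rle_trans; [|exact B]. apply Rmult_le_compat_l; [apply Cmod_ge_0|].
    simpl. rewrite !Rmult_1_r. assert (Cmod w <= R) by (unfold R; lra). apply Rmult_le_compat; lra. }
  assert (P : 0 <= INR n ^ 2 * Cmod k ^ 2 * R ^ n / Cmod w ^ 2).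
  { apply Rdiv_le_0_compat; [|apply pow_lt; lra]. apply Rmult_le_pos; [apply Rmult_le_pos|];
    apply pow_le; try lra. apply pos_INR. }
  eapply Rle_trans. { apply Rmult_le_compat; [apply Cmod_ge_0|exact Hn0|exact E1|exact Hn]. }
  assert (Q : (R / rho) ^ n <= (r' / rho) ^ n).
  { apply pow_incr. split; [apply Rdiv_le_0_compat; lra|]. unfold Rdiv. apply Rmult_le_compat_r; [|lra].
    left; apply Rinv_0_lt_compat; lra. }
  replace (INR n ^ 2 * Cmod k ^ 2 * R ^ n / Cmod w ^ 2 * (M / rho ^ n))
    with ((M * Cmod k ^ 2 / Cmod w ^ 2) * (INR n ^ 2 * (R / rho) ^ n)).
  2: { unfold Rdiv. rewrite Rpow_mult_distr, pow_inv. field. repeat split; try (apply pow_nonzero); lra. }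
  apply Rmult_le_compat_l.
  - apply Rdiv_le_0_compat; [apply Rmult_le_pos; [exact HM|apply pow_le; exact Hk]|apply pow_lt; lra].
  - apply Rmult_le_compat_l; [apply pow_le, pos_INR|exact Q].
Qed.

Lemma termD_bound (w : C) (n : nat) (q rho M nrm : R) :
  0 < Cmod w -> 0 < rho -> Cmod w / rho <= q -> 0 <= M -> 0 <= nrm -> nrm <= M / rho ^ n ->
  Cmod (Dn w n) * nrm <= (M / Cmod w) * (INR n ^ 2 * q ^ n).
Proof.
  intros Hw Hr Hq HM Hn0 Hn.
  assert (E1 : Cmod (Dn w n) <= INR n * Cmod w ^ n / Cmod w).
  { pose proof (Dn_bound w (Cmod w) n (Rle_refl _)) as B.
    apply Rmult_le_reg_r with (Cmod w); [lra|].
    unfold Rdiv. rewrite Rmult_assoc, Rinv_l, Rmult_1_r by lra. exact B. }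
  eapply Rle_trans. { apply Rmult_le_compat; [apply Cmod_ge_0|exact Hn0|exact E1|exact Hn]. }
  replace (INR n * Cmod w ^ n / Cmod w * (M / rho ^ n)) with ((M / Cmod w) * (INR n * (Cmod w / rho) ^ n)).
  2: { unfold Rdiv. rewrite Rpow_mult_distr, pow_inv. field. repeat split; try (apply pow_nonzero); lra. }
  apply Rmult_le_compat_l; [apply Rdiv_le_0_compat; lra|].
  assert (Hn1 : INR n <= INR n ^ 2).
  { pose proof (pos_INR n). destruct n; [simpl; lra|]. assert (1 <= INR (S n)) by (rewrite S_INR; pose proof (pos_INR n); lra). replace (INR (S n) ^ 2) with (INR (S n) * INR (S n)) by ring. nra. }
  apply Rmult_le_compat; [apply pos_INR|apply pow_le, Rdiv_le_0_compat; [apply Cmod_ge_0|lra]|exact Hn1|].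
  apply pow_incr. split; [apply Rdiv_le_0_compat; [apply Cmod_ge_0|lra]|exact Hq].
Qed.

Lemma scal_En {V : CompleteNormedModule C_AbsRing} (w k : C) n (x : V) :
  scal (En w k n) x = plus (plus (scal (cpow (Cplus w k) n) x) (opp (scal (cpow w n) x))) (opp (scal k (scal (Dn w n) x))).
Proof.
  unfold En. rewrite (scal_assoc (K:=C_AbsRing)).
  change (Cminus (Cminus (cpow (w + k) n) (cpow w n)) (Cmult k (Dn w n)))
    with (plus (G:=C_AbsRing) (plus (G:=C_AbsRing) (cpow (w + k) n) (opp (G:=C_AbsRing) (cpow w n))) (opp (G:=C_AbsRing) (mult (K:=C_AbsRing) k (Dn w n)))).
  rewrite !(scal_distr_r (K:=C_AbsRing)), !(scal_opp_l (K:=C_AbsRing)). reflexivity.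
Qed.

Lemma PS_holo {V : CompleteNormedModule C_AbsRing} (a : nat -> V) M rho w :
  0 < rho -> (forall n, norm (a n) <= M / rho ^ n) -> 0 < Cmod w < rho ->
  exists (d : V) (C0 delta : R), 0 < delta /\ 0 <= C0 /\
    forall k : C, Cmod k < delta ->
      norm (minus (minus (PS a (Cplus w k)) (PS a w)) (scal k d)) <= C0 * Cmod k ^ 2.
Proof.
  intros Hr HM [Hw0 Hw].
  assert (HM0 := bound_M_nonneg a M rho Hr HM).
  set (r' := (Cmod w + rho) / 2). set (q := r' / rho).
  assert (Hq : 0 < q < 1).
  { unfold q, r'. split. apply Rdiv_lt_0_compat; lra.
    apply Rmult_lt_reg_r with rho; [lra|]. field_simplify; lra. }
  assert (Hwq : Cmod w / rho <= q).
  { unfold q, r'. unfold Rdiv. apply Rmult_le_compat_r; [left; apply Rinv_0_lt_compat; lra|lra]. }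
  pose proof (ex_series_n2 q Hq) as Ex2.
  set (Sq := Series (fun n => INR n ^ 2 * q ^ n)).
  assert (HSq : is_series (fun n => INR n ^ 2 * q ^ n) Sq) by (apply Series_correct; exact Ex2).
  assert (Hnn : forall n, 0 <= INR n ^ 2 * q ^ n).
  { intro n. apply Rmult_le_pos; apply pow_le; [apply pos_INR|lra]. }
  set (d := Lser (fun n => scal (Dn w n) (a n))).
  assert (Hd : is_series (fun n => scal (Dn w n) (a n)) d).
  { apply Lser_correct. apply (ex_series_le _ (fun n => (M / Cmod w) * (INR n ^ 2 * q ^ n))).
    - intro n. eapply Rle_trans; [apply norm_scalC|].
      apply termD_bound with rho; try assumption. apply norm_ge_0. apply HM.
    - apply (ex_series_scal_l (K:=R_AbsRing) (V:=R_NormedModule) (M / Cmod w) (fun n => INR n ^ 2 * q ^ n)).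
      exact Ex2. }
  exists d, (M * Sq / Cmod w ^ 2), ((rho - Cmod w) / 2). split; [lra|split].
  { apply Rdiv_le_0_compat; [|apply pow_lt; lra]. apply Rmult_le_pos; [exact HM0|].
    eapply Rle_trans; [|apply (psum_le _ _ Hnn HSq 0%nat)]. rewrite sum_O. apply Hnn. }
  intros k Hk.
  assert (HR : Cmod w + Cmod k <= r') by (unfold r'; lra).
  assert (Hwk : Cmod (Cplus w k) < rho).
  { eapply Rle_lt_trans; [apply Cmod_triangle|]. unfold r' in HR. lra. }
  pose proof (PS_conv a M rho w Hr HM Hw) as S0.
  pose proof (PS_conv a M rho (Cplus w k) Hr HM Hwk) as S1.
  pose proof (is_series_minus _ _ _ _ (is_series_minus _ _ _ _ S1 S0) (is_series_scal k _ _ Hd)) as S2.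
  apply (norm_lim_le (fun n => scal (En w k n) (a n))).
  - eapply is_series_ext; [|exact S2]. intro n. simpl. symmetry. apply scal_En.
  - intro N. eapply Rle_trans; [apply norm_sum_n_m|].
    eapply Rle_trans.
    { apply (sum_n_m_le _ (fun n => (M * Cmod k ^ 2 / Cmod w ^ 2) * (INR n ^ 2 * q ^ n))).
      intro n. eapply Rle_trans; [apply norm_scalC|].
      apply termE_bound; try assumption. apply norm_ge_0. apply HM. }
    change (sum_n_m (fun n => (M * Cmod k ^ 2 / Cmod w ^ 2) * (INR n ^ 2 * q ^ n)) 0 N)
      with (sum_n (fun n => mult (K:=R_Ring) (M * Cmod k ^ 2 / Cmod w ^ 2) (INR n ^ 2 * q ^ n)) N).
    rewrite sum_n_mult_l. change (mult (K:=R_Ring) (M * Cmod k ^ 2 / Cmod w ^ 2) (sum_n (fun n => INR n ^ 2 * q ^ n) N)) with ((M * Cmod k ^ 2 / Cmod w ^ 2) * (sum_n (fun n => INR n ^ 2 * q ^ n) N)).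
    replace (M * Sq / Cmod w ^ 2 * Cmod k ^ 2) with ((M * Cmod k ^ 2 / Cmod w ^ 2) * Sq) by (field; lra).
    apply Rmult_le_compat_l.
    + apply Rdiv_le_0_compat; [apply Rmult_le_pos; [exact HM0|apply pow_le, Cmod_ge_0]|apply pow_lt; lra].
    + apply psum_le; assumption.
Qed.

Lemma sum_n_first {G : AbelianMonoid} (a : nat -> G) n :
  sum_n a (S n) = plus (a 0%nat) (sum_n (fun k => a (S k)) n).
Proof. unfold sum_n. rewrite sum_Sn_m by lia. rewrite sum_n_m_S. reflexivity. Qed.

Definition negpart {G : AbelianMonoid} (u : Z -> G) (m : nat) : G :=
  match m with O => zero | S m' => u (- Z.of_nat (S m'))%Z end.

Lemma psum_split {G : AbelianMonoid} (u : Z -> G) N M :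
  sum_n (fun k => u (Z.of_nat k - Z.of_nat N)%Z) (N + M) =
  plus (sum_n (negpart u) N) (sum_n (fun n => u (Z.of_nat n)) M).
Proof.
  induction N.
  - simpl. rewrite sum_O. simpl. rewrite plus_zero_l. apply sum_n_ext. intro n. f_equal. lia.
  - simpl (S N + M)%nat. rewrite sum_n_first.
    rewrite (sum_n_ext (fun k => u (Z.of_nat (S k) - Z.of_nat (S N))%Z) (fun k => u (Z.of_nat k - Z.of_nat N)%Z))
      by (intro n; f_equal; lia).
    rewrite IHN. rewrite sum_Sn. simpl negpart.
    replace (Z.of_nat 0 - Z.of_nat (S N))%Z with (- Z.of_nat (S N))%Z by lia.
    rewrite !plus_assoc. f_equal. apply plus_comm.
Qed.

Lemma lin_zero {A B : ModuleSpace C_Ring} (T : A -> B) : Defs.is_linear T -> T zero = zero.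
Proof. intro HT. rewrite <- (scal_zero_l (K:=C_Ring) (zero : A)). rewrite (lin_scal T) by exact HT.
  apply scal_zero_l. Qed.

Lemma lin_sum {A B : ModuleSpace C_Ring} (T : A -> B) (f : nat -> A) N : Defs.is_linear T ->
  T (sum_n f N) = sum_n (fun n => T (f n)) N.
Proof. intro HT. induction N.
  - rewrite !sum_O. reflexivity.
  - rewrite !sum_Sn, (lin_plus T) by exact HT. rewrite IHN. reflexivity. Qed.

Lemma cpow_inv (z : C) n : z <> 0%C -> cpow (Cinv z) n = Cinv (cpow z n).
Proof. intro Hz. induction n.
  - unfold cpow; simpl. unfold one; simpl. apply C_ext; simpl; field.
  - rewrite !cpow_S, IHn. assert (cpow z n <> 0%C).
    { intro E. apply (Cmod_gt_0 z) in Hz. assert (Cmod (cpow z n) = 0) by (rewrite E; apply Cmod_0).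
      rewrite Cmod_cpow in H. apply pow_nonzero in H; lra. }
    field. split; assumption. Qed.

Lemma Zpow_nat z n : Zpow z (Z.of_nat n) = cpow z n.
Proof. destruct n. - reflexivity. - simpl. rewrite SuccNat2Pos.id_succ. reflexivity. Qed.

Lemma Zpow_negnat z n : Zpow z (- Z.of_nat (S n))%Z = Cinv (cpow z (S n)).
Proof. simpl. rewrite SuccNat2Pos.id_succ. reflexivity. Qed.

Lemma exp_nat n : exp (IZR (Z.of_nat n)) = exp 1 ^ n.
Proof. rewrite <- INR_IZR_INZ. induction n.
  - simpl. apply exp_0.
  - rewrite S_INR, exp_plus, IHn. simpl. ring. Qed.

Lemma psumZ_split (Bc : couple) (u : Z -> cV Bc) N M :
  psumZ Bc u N M = plus (sum_n (negpart u) N) (sum_n (fun n => u (Z.of_nat n)) M).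
Proof. apply psum_split. Qed.

Section Construct.
Variables (X0 X1 : pseudolattice) (Bc : couple) (b : Z -> cV Bc)
  (a0 : seqZ (cB0 Bc)) (a1 : seqZ (cB1 Bc)).
Hypothesis HJ : J_rep X0 X1 Bc b a0 a1.

Definition a0' (m : nat) : cB0 Bc := match m with O => zero | S m' => a0 (- Z.of_nat (S m'))%Z end.
Definition a1' (n : nat) : cB1 Bc := a1 (Z.of_nat n).
Definition N0 := pl_norm X0 (cB0 Bc) a0.
Definition N1 := pl_norm X1 (cB1 Bc) (fun n => scal (RtoC (exp (IZR n))) (a1 n)).

Lemma a0'_bound m : norm (a0' m) <= N0 / 1 ^ m.
Proof. destruct HJ as [_ [_ [M0 _]]]. rewrite pow1. unfold Rdiv. rewrite Rinv_1, Rmult_1_r.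
  unfold N0. destruct m.
  - simpl. eapply Rle_trans; [right; apply (norm_zero (K:=C_AbsRing) (V:=cB0 Bc))|]. eapply Rle_trans; [apply (norm_ge_0 (a0 0%Z))|]. apply (pl_coord X0 _ a0 M0 0%Z).
  - apply (pl_coord X0 _ a0 M0). Qed.

Lemma a1'_bound n : norm (a1' n) <= N1 / exp 1 ^ n.
Proof. destruct HJ as [_ [_ [_ M1]]]. unfold a1', N1. rewrite <- exp_nat.
  set (j := Z.of_nat n). set (e := exp (IZR j)).
  assert (He : 0 < e) by apply exp_pos.
  assert (E : a1 j = scal (RtoC (/ e)) (scal (RtoC e) (a1 j))).
  { rewrite (scal_assoc (K:=C_AbsRing)).
    replace (mult (K:=C_AbsRing) (RtoC (/ e)) (RtoC e)) with (one (K:=C_AbsRing)).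
    - rewrite scal_one. reflexivity.
    - unfold mult, one; simpl. apply C_ext; simpl; field; lra. }
  rewrite E. eapply Rle_trans; [apply norm_scalC|]. rewrite Cmod_R, Rabs_pos_eq.
  2: left; apply Rinv_0_lt_compat, He.
  unfold Rdiv. rewrite Rmult_comm. apply Rmult_le_compat_r; [left; apply Rinv_0_lt_compat, He|].
  apply (pl_coord X1 _ _ M1 j). Qed.

Definition fF (z : C) : cV Bc := plus (ci0 Bc (PS a0' (Cinv z))) (ci1 Bc (PS a1' z)).

Lemma ci0_term (z : C) (m : nat) : z <> 0%C ->
  ci0 Bc (scal (cpow (Cinv z) m) (a0' m)) = negpart (fun n => scal (Zpow z n) (b n)) m.
Proof. destruct HJ as [H0 _]. intro Hz. destruct m.
  - simpl negpart. transitivity (ci0 Bc zero); [f_equal; apply (scal_zero_r (K:=C_AbsRing) (V:=cB0 Bc))|apply (lin_zero (ci0 Bc)), ci0_lin].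
  - simpl negpart. unfold a0'. rewrite (lin_scal (ci0 Bc)) by apply ci0_lin. rewrite H0.
    rewrite SuccNat2Pos.id_succ, cpow_inv by exact Hz. reflexivity. Qed.

Lemma ci1_term (z : C) (n : nat) : ci1 Bc (scal (cpow z n) (a1' n)) = scal (Zpow z (Z.of_nat n)) (b (Z.of_nat n)).
Proof. destruct HJ as [_ [H1 _]]. unfold a1'. rewrite (lin_scal (ci1 Bc)) by apply ci1_lin.
  rewrite H1, Zpow_nat. reflexivity. Qed.

Lemma fF_conv (z : C) : in_annulus z -> seriesZ_conv Bc (fun n => scal (Zpow z n) (b n)) (fF z).
Proof.
  intros [Hz1 Hz2]. assert (Hz : z <> 0%C) by (intro E; rewrite E, Cmod_0 in Hz1; lra).
  assert (Hiz : Cmod (Cinv z) < 1) by (rewrite Cmod_inv by exact Hz; rewrite <- Rinv_1; apply Rinv_lt_contravar; lra).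
  pose proof (PS_conv a0' N0 1 (Cinv z) Rlt_0_1 a0'_bound Hiz) as S0.
  pose proof (PS_conv a1' N1 (exp 1) z (exp_pos 1) a1'_bound Hz2) as S1.
  intros eps He.
  destruct (proj1 (filterlim_locally_ball_norm _ _) S0 (mkposreal (eps/2) ltac:(lra))) as [K1 HK1].
  destruct (proj1 (filterlim_locally_ball_norm _ _) S1 (mkposreal (eps/2) ltac:(lra))) as [K2 HK2].
  exists (max K1 K2). intros N M HN HM.
  specialize (HK1 N ltac:(lia)). specialize (HK2 M ltac:(lia)).
  unfold ball_norm in HK1, HK2; simpl in HK1, HK2.
  exists (minus (sum_n (fun m => scal (cpow (Cinv z) m) (a0' m)) N) (PS a0' (Cinv z))).
  exists (minus (sum_n (fun n => scal (cpow z n) (a1' n)) M) (PS a1' z)).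
  split; [|apply Rlt_le_trans with (eps/2 + eps/2); [apply Rplus_lt_compat; [exact HK1|exact HK2]|lra]].
  rewrite (lin_minus (ci0 Bc)) by apply ci0_lin. rewrite (lin_minus (ci1 Bc)) by apply ci1_lin.
  rewrite <- (ag_mm (G:=cV Bc)). unfold fF. rewrite psumZ_split.
  rewrite (lin_sum (ci0 Bc)) by apply ci0_lin. rewrite (lin_sum (ci1 Bc)) by apply ci1_lin.
  f_equal. f_equal.
  - apply sum_n_ext. intro m. apply ci0_term, Hz.
  - apply sum_n_ext. intro n. apply ci1_term.
Qed.

End Construct.

Lemma G1 {V W U : ModuleSpace C_Ring} (i0 : V -> U) (i1 : W -> U) a c e b d f (h : C) :
  Defs.is_linear i0 -> Defs.is_linear i1 ->
  minus (minus (plus (i0 a) (i1 b)) (plus (i0 c) (i1 d))) (scal h (plus (i0 e) (i1 f))) =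
  plus (i0 (minus (minus a c) (scal h e))) (i1 (minus (minus b d) (scal h f))).
Proof.
  intros L0 L1.
  rewrite !(lin_minus i0) by exact L0. rewrite !(lin_minus i1) by exact L1.
  rewrite (lin_scal i0) by exact L0. rewrite (lin_scal i1) by exact L1.
  rewrite scal_distr_l. rewrite <- (ag_mm (G:=U)). rewrite <- (ag_mm (G:=U)). reflexivity.
Qed.

Lemma G2 {V : ModuleSpace C_Ring} (Z d : V) (h c k : C) :
  minus Z (scal h (scal c d)) = plus (minus Z (scal k d)) (scal (plus k (opp (mult h c))) d).
Proof.
  rewrite (scal_assoc (K:=C_Ring) (V:=V)), (scal_distr_r (K:=C_Ring) (V:=V)), (scal_opp_l (K:=C_Ring) (V:=V)). unfold minus.
  rewrite <- (plus_assoc (G:=V)). f_equal. rewrite (plus_assoc (G:=V)).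
  rewrite (plus_comm (opp (scal k d))), (plus_opp_r (G:=V)), plus_zero_l. reflexivity.
Qed.

Section Construct2.
Variables (X0 X1 : pseudolattice) (Bc : couple) (b : Z -> cV Bc)
  (a0 : seqZ (cB0 Bc)) (a1 : seqZ (cB1 Bc)).
Hypothesis HJ : J_rep X0 X1 Bc b a0 a1.

Lemma fF_holo (z : C) : in_annulus z -> holo_at Bc (fF Bc a0 a1) z.
Proof.
  intros [Hz1 Hz2]. assert (Hz : z <> 0%C) by (intro E; rewrite E, Cmod_0 in Hz1; lra).
  set (w := Cinv z).
  assert (Hw : 0 < Cmod w < 1).
  { unfold w. rewrite Cmod_inv by exact Hz. split. apply Rinv_0_lt_compat; lra.
    rewrite <- Rinv_1; apply Rinv_lt_contravar; lra. }
  destruct (PS_holo (a0' Bc a0) (N0 X0 Bc a0) 1 w Rlt_0_1 (a0'_bound X0 X1 Bc b a0 a1 HJ) Hw)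
    as [d0 [C0 [del0 [Hdel0 [HC0 E0]]]]].
  destruct (PS_holo (a1' Bc a1) (N1 X1 Bc a1) (exp 1) z (exp_pos 1) (a1'_bound X0 X1 Bc b a0 a1 HJ) (conj (Rlt_trans _ _ _ Rlt_0_1 Hz1) Hz2))
    as [d1 [C1 [del1 [Hdel1 [HC1 E1]]]]].
  exists (plus (ci0 Bc (scal (Copp (Cmult w w)) d0)) (ci1 Bc d1)).
  intros eps He.
  assert (Hnd0 := norm_ge_0 d0).
  set (K := C0 + norm d0 + C1 + 1).
  assert (HK : 0 < K) by (unfold K; lra).
  exists (Rmin (Rmin del0 del1) (Rmin (Cmod z - 1) (eps / K))).
  split.
  { apply Rmin_pos; apply Rmin_pos; try lra. apply Rdiv_lt_0_compat; lra. }
  intros h Hh0 Hh.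
  assert (Hh1 : Cmod h < del0) by (eapply Rlt_le_trans; [exact Hh|]; eapply Rle_trans; apply Rmin_l).
  assert (Hh2 : Cmod h < del1) by (eapply Rlt_le_trans; [exact Hh|]; eapply Rle_trans; [apply Rmin_l|apply Rmin_r]).
  assert (Hh3 : Cmod h < Cmod z - 1) by (eapply Rlt_le_trans; [exact Hh|]; eapply Rle_trans; [apply Rmin_r|apply Rmin_l]).
  assert (Hh4 : Cmod h < eps / K) by (eapply Rlt_le_trans; [exact Hh|]; eapply Rle_trans; [apply Rmin_r|apply Rmin_r]).
  assert (Hhp : 0 < Cmod h) by (apply Cmod_gt_0; exact Hh0).
  assert (Hzh1 : 1 < Cmod (Cplus z h)).
  { assert (T : Cmod z <= Cmod (Cplus z h) + Cmod (Copp h)).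
    { replace z with (Cplus (Cplus z h) (Copp h)) at 1 by ring. apply Cmod_triangle. }
    rewrite Cmod_opp in T. lra. }
  assert (Hzh : Cplus z h <> 0%C) by (intro E; rewrite E, Cmod_0 in Hzh1; lra).
  set (k := Cminus (Cinv (Cplus z h)) w).
  assert (Hkeq : Cinv (Cplus z h) = Cplus w k) by (unfold k; ring).
  assert (Hkv : k = Cdiv (Copp h) (Cmult z (Cplus z h))) by (unfold k, w; field; split; assumption).
  assert (Hk : Cmod k <= Cmod h).
  { rewrite Hkv. rewrite Cmod_div by (apply Cmult_neq_0; assumption). rewrite Cmod_opp, Cmod_mult.
    unfold Rdiv. rewrite <- (Rmult_1_r (Cmod h)) at 2. apply Rmult_le_compat_l; [lra|].
    rewrite <- Rinv_1. apply Rinv_le_contravar; [lra|]. nra. }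
  set (c' := plus k (opp (mult h (Copp (Cmult w w))))).
  assert (Hcv : c' = Cdiv (Cmult h h) (Cmult (Cmult z z) (Cplus z h))).
  { unfold c', k, w, plus, opp, mult; simpl. field. split; assumption. }
  assert (Hc : Cmod c' <= Cmod h ^ 2).
  { rewrite Hcv. rewrite Cmod_div by (repeat apply Cmult_neq_0; assumption). rewrite !Cmod_mult.
    unfold Rdiv. replace (Cmod h ^ 2) with (Cmod h * Cmod h * 1) by ring.
    apply Rmult_le_compat_l; [nra|].
    rewrite <- Rinv_1. apply Rinv_le_contravar; [lra|].
    assert (1 <= Cmod z * Cmod z) by nra. nra. }
  exists (minus (minus (PS (a0' Bc a0) (Cinv (Cplus z h))) (PS (a0' Bc a0) w)) (scal h (scal (Copp (Cmult w w)) d0))).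
  exists (minus (minus (PS (a1' Bc a1) (Cplus z h)) (PS (a1' Bc a1) z)) (scal h d1)).
  split.
  { unfold fF. symmetry. apply (G1 (ci0 Bc) (ci1 Bc)); [apply ci0_lin|apply ci1_lin]. }
  rewrite (G2 _ d0 h (Copp (Cmult w w)) k). fold c'. rewrite Hkeq.
  assert (B0 : norm (plus (minus (minus (PS (a0' Bc a0) (Cplus w k)) (PS (a0' Bc a0) w)) (scal k d0)) (scal c' d0))
               <= C0 * Cmod h ^ 2 + Cmod h ^ 2 * norm d0).
  { eapply Rle_trans; [apply (norm_triangle (K:=C_AbsRing) (V:=cB0 Bc))|]. apply Rplus_le_compat.
    - eapply Rle_trans; [apply E0; lra|]. apply Rmult_le_compat_l; [exact HC0|].
      apply pow_incr. split; [apply Cmod_ge_0|exact Hk].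
    - eapply Rle_trans; [apply norm_scalC|]. apply Rmult_le_compat_r; [exact Hnd0|exact Hc]. }
  assert (B1 := E1 h Hh2).
  assert (Fin : C0 * Cmod h ^ 2 + Cmod h ^ 2 * norm d0 + C1 * Cmod h ^ 2 < eps * Cmod h).
  { assert (Cmod h * K < eps).
    { apply Rmult_lt_reg_r with (/K). apply Rinv_0_lt_compat; lra.
      rewrite Rmult_assoc, Rinv_r, Rmult_1_r by lra. exact Hh4. }
    unfold K in *. simpl. nra. }
  eapply Rle_lt_trans; [|exact Fin]. apply Rplus_le_compat; [exact B0|exact B1].
Qed.

End Construct2.

Lemma construct X0 X1 Bc b a0 a1 : J_rep X0 X1 Bc b a0 a1 ->
  exists f, in_F X0 X1 Bc f /\ forall z, in_annulus z ->
    seriesZ_conv Bc (fun n => scal (Zpow z n) (b n)) (f z).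
Proof.
  intro HJ. exists (fF Bc a0 a1). split; [split|].
  - intros z Hz. exact (fF_holo X0 X1 Bc b a0 a1 HJ z Hz).
  - exists b. split; [exists a0, a1; exact HJ|]. intros z Hz. exact (fF_conv X0 X1 Bc b a0 a1 HJ z Hz).
  - intros z Hz. exact (fF_conv X0 X1 Bc b a0 a1 HJ z Hz).
Qed.

Theorem lemma2p1 (X0 X1 : pseudolattice) (Bc : couple) :
  rotation_invariant_couple X0 X1 ->
  forall s : C, in_annulus s ->
    (* (i) *)
    (forall f : C -> cV Bc, in_F X0 X1 Bc f -> in_Bs X0 X1 Bc (RtoC (Cmod s)) (f s)) /\
    (* (ii) *)
    (forall x : cV Bc, in_Bs X0 X1 Bc (RtoC (Cmod s)) x ->
       exists f : C -> cV Bc, in_F X0 X1 Bc f /\ f s = x) /\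
    (* (iii) *)
    (forall x : cV Bc,
       (in_Bs X0 X1 Bc s x <-> in_Bs X0 X1 Bc (RtoC (Cmod s)) x) /\
       (in_Bs X0 X1 Bc s x ->
          Bs_norm X0 X1 Bc s x = Bs_norm X0 X1 Bc (RtoC (Cmod s)) x)).
Proof.
  intros HR s Hs.
  assert (Hs0 := annulus_nz s Hs).
  destruct (polar s Hs0) as [t Ht].
  assert (Hr : Cmod s <> 0) by (apply Rgt_not_eq, Cmod_gt_0, Hs0).
  assert (fwd : forall b a0 a1 x, J_rep X0 X1 Bc b a0 a1 ->
     seriesZ_conv Bc (fun n => scal (Zpow s n) (b n)) x ->
     J_rep X0 X1 Bc (rotV t b) (rot t a0) (rot t a1) /\
     J_norm X0 X1 Bc (rot t a0) (rot t a1) = J_norm X0 X1 Bc a0 a1 /\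
     seriesZ_conv Bc (fun n => scal (Zpow (RtoC (Cmod s)) n) (rotV t b n)) x).
  { intros b a0 a1 x HJ Hc. destruct (J_rot X0 X1 Bc t b a0 a1 HR HJ) as [A B].
    split; [exact A|split; [exact B|]].
    eapply seriesZ_ext; [|exact Hc]. intro n. symmetry. apply term1; assumption. }
  assert (bwd : forall b a0 a1 x, J_rep X0 X1 Bc b a0 a1 ->
     seriesZ_conv Bc (fun n => scal (Zpow (RtoC (Cmod s)) n) (b n)) x ->
     J_rep X0 X1 Bc (rotV (-t) b) (rot (-t) a0) (rot (-t) a1) /\
     J_norm X0 X1 Bc (rot (-t) a0) (rot (-t) a1) = J_norm X0 X1 Bc a0 a1 /\
     seriesZ_conv Bc (fun n => scal (Zpow s n) (rotV (-t) b n)) x).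
  { intros b a0 a1 x HJ Hc. destruct (J_rot X0 X1 Bc (-t) b a0 a1 HR HJ) as [A B].
    split; [exact A|split; [exact B|]].
    eapply seriesZ_ext; [|exact Hc]. intro n. symmetry. apply term2; assumption. }
  split; [|split].
  - intros f [_ [b [[a0 [a1 HJ]] Hser]]].
    destruct (fwd b a0 a1 (f s) HJ (Hser s Hs)) as [A [_ C]].
    exists (rotV t b). split; [exists (rot t a0), (rot t a1); exact A|exact C].
  - intros x [b [[a0 [a1 HJ]] Hser]].
    destruct (bwd b a0 a1 x HJ Hser) as [A [_ C]].
    destruct (construct X0 X1 Bc _ _ _ A) as [f [Hf Hc]].
    exists f. split; [exact Hf|]. eapply seriesZ_unique; [apply Hc, Hs|exact C].
  - intro x. split; [split|intros _].
    + intros [b [[a0 [a1 HJ]] Hser]].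
      destruct (fwd b a0 a1 x HJ Hser) as [A [_ C]].
      exists (rotV t b). split; [exists (rot t a0), (rot t a1); exact A|exact C].
    + intros [b [[a0 [a1 HJ]] Hser]].
      destruct (bwd b a0 a1 x HJ Hser) as [A [_ C]].
      exists (rotV (-t) b). split; [exists (rot (-t) a0), (rot (-t) a1); exact A|exact C].
    + unfold Bs_norm. apply Glb_Rbar_eqset. intro r. split.
      * intros [b [a0 [a1 [HJ [Hser ->]]]]].
        destruct (fwd b a0 a1 x HJ Hser) as [A [B C]].
        exists (rotV t b), (rot t a0), (rot t a1). auto.
      * intros [b [a0 [a1 [HJ [Hser ->]]]]].
        destruct (bwd b a0 a1 x HJ Hser) as [A [B C]].
        exists (rotV (-t) b), (rot (-t) a0), (rot (-t) a1). auto.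
Qed.
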